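(* Let $n\ge 2$ and $\lambda>0$. Then the CUSUM classifier $h^{\mathrm{CUSUM}}_\lambda:\mathbb{R}^n\to\{0,1\}$, $h^{\mathrm{CUSUM}}_\lambda(\boldsymbol{x})=\mathbb{1}\{\|\mathcal{C}(\boldsymbol{x})\|_\infty>\lambda\}$, belongs to $\mathcal{H}_{1,2n-2}$.
   Context: For $i\in[n-1]$ let $\boldsymbol{v}_i=\bigl(\sqrt{\tfrac{n-i}{in}}\boldsymbol{1}_i^\top,\,-\sqrt{\tfrac{i}{(n-i)n}}\boldsymbol{1}_{n-i}^\top\bigr)^\top\in\mathbb{R}^n$, where $\boldsymbol{1}_k$ is the all-ones vector of length $k$, and define the CUSUM transformation $\mathcal{C}(\boldsymbol{x})=(\boldsymbol{v}_1^\top\boldsymbol{x},\ldots,\boldsymbol{v}_{n-1}^\top\boldsymbol{x})^\top$. Neural network classes: for $L\ge1$ and widths $\boldsymbol{m}=(m_1,\ldots,m_L)$, set $m_0=n$, $m_{L+1}=1$; for $\boldsymbol{b}\in\mathbb{R}^r$ let $\sigma_{\boldsymbol{b}}(y_1,\ldots,y_r)=(\max(y_1-b_1,0),\ldots,\max(y_r-b_r,0))$. $\mathcal{H}_{L,\boldsymbol{m}}$ is the class of all functions $h:\mathbb{R}^n\to\{0,1\}$ of the form $h(\boldsymbol{x})=\sigma^*_\lambda W_L\sigma_{\boldsymbol{b}_L}W_{L-1}\sigma_{\boldsymbol{b}_{L-1}}\cdots W_1\sigma_{\boldsymbol{b}_1}W_0\boldsymbol{x}$, where $\sigma^*_\lambda(x)=\mathbb{1}\{x>\lambda\}$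 with $\lambda>0$, $W_\ell\in\mathbb{R}^{m_{\ell+1}\times m_\ell}$ for $\ell=0,\ldots,L$, and $\boldsymbol{b}_\ell\in\mathbb{R}^{m_\ell}$. $\mathcal{H}_{1,m}$ denotes the class with one hidden layer of width $m$. *)

(* Defs.v *)
(* Reals are modelled by an arbitrary real closed field R
   (Num.sqrt available); the concrete reals are an instance. *)
From HB Require Import structures.
From mathcomp Require Import all_boot all_order all_algebra.
Set Implicit Arguments. Unset Strict Implicit. Unset Printing Implicit Defensive.
Import Order.TTheory GRing.Theory Num.Theory.
Local Open Scope ring_scope.

Definition relu_b (R : rcfType) (m : nat) (b y : 'cV[R]_m) : 'cV[R]_m :=
  \col_i Num.max (y i 0 - b i 0) 0.

(* A ReLU network with input dimension a and hidden widths ms = (m_1,...,m_L):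
   Hidden W b N  computes  x |-> N (sigma_b (W x)),  Out W computes x |-> W x
   (W a 1 x a matrix).  So the network
   Hidden W_0 b_1 (Hidden W_1 b_2 (... (Out W_L)))
   realises  W_L sigma_{b_L} W_{L-1} ... W_1 sigma_{b_1} W_0 x. *)
Inductive net (R : rcfType) : nat -> seq nat -> Type :=
| Out : forall a, 'M[R]_(1, a) -> net R a [::]
| Hidden : forall a m ms, 'M[R]_(m, a) -> 'cV[R]_m -> net R m ms -> net R a (m :: ms).

Fixpoint net_eval (R : rcfType) (a : nat) (ms : seq nat) (N : net R a ms)
  : 'cV[R]_a -> R :=
  match N in net _ a ms return 'cV[R]_a -> R with
  | Out _ W => fun x => (W *m x) 0 0
  | Hidden _ _ _ W b N' => fun x => net_eval N' (relu_b b (W *m x))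
  end.

(* The class H_{L,m} with L = size ms (>= 1) and widths ms, input dim n:
   h(x) = 1{ N(x) > lambda } for some network N and lambda > 0. *)
Definition in_H (R : rcfType) (n : nat) (ms : seq nat) (h : 'cV[R]_n -> bool)
  : Prop :=
  (0 < size ms)%N /\
  exists lam : R, 0 < lam /\
    exists N : net R n ms, forall x, h x = (lam < net_eval N x).

(* Entry j (0-based) of the CUSUM vector v_k, k in [n-1] (1-based). *)
Definition cusum_v (R : rcfType) (n k j : nat) : R :=
  if (j < k)%N then Num.sqrt ((n - k)%:R / (k%:R * n%:R))
  else - Num.sqrt (k%:R / ((n - k)%:R * n%:R)).

(* C(x) in R^{n-1}; row i corresponds to k = i+1. *)
Definition cusum (R : rcfType) (n : nat) (x : 'cV[R]_n) : 'cV[R]_(n.-1) :=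
  \col_(i < n.-1) \sum_(j < n) cusum_v R n i.+1 j * x j 0.

Definition sup_norm (R : rcfType) (m : nat) (y : 'cV[R]_m) : R :=
  \big[Num.max/0]_(i < m) `|y i 0|.

Definition h_cusum (R : rcfType) (n : nat) (lam : R) (x : 'cV[R]_n) : bool :=
  lam < sup_norm (cusum x).

(* Main.v *)
Require Import Defs.
From mathcomp Require Import all_boot all_order all_algebra.
From mathcomp Require Import ring lra zify.
Import Order.TTheory GRing.Theory Num.Theory.
Local Open Scope ring_scope.

Lemma mxa (R : rcfType) (a : R) : 0 <= a -> Num.max a 0 = a.
Proof. by move=> h; rewrite /Num.max; case: ltP => // h2; apply/le_anti; rewrite h ltW. Qed.
Lemma mx0 (R : rcfType) (a : R) : a <= 0 -> Num.max a 0 = 0.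
Proof. by move=> h; rewrite /Num.max; case: ltP => // h2; apply/le_anti; rewrite h h2. Qed.

Lemma g_eq (R : rcfType) (lam t : R) : 0 < lam ->
  Num.max (t + lam) 0 + Num.max (- t + lam) 0 = 2 * lam + Num.max (`|t| - lam) 0.
Proof.
move=> hl.
case: (lerP 0 t) => ht.
- rewrite ger0_norm //.
  case: (lerP t lam) => htl.
  + rewrite (@mxa _ (t + lam)) ?(@mxa _ (- t + lam)) ?(@mx0 _ (t - lam)); lra.
  + rewrite (@mxa _ (t + lam)) ?(@mx0 _ (- t + lam)) ?(@mxa _ (t - lam)); lra.
- rewrite ltr0_norm //.
  case: (lerP (- t) lam) => htl.
  + rewrite (@mxa _ (t + lam)) ?(@mxa _ (- t + lam)) ?(@mx0 _ (- t - lam)); lra.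
  + rewrite (@mx0 _ (t + lam)) ?(@mxa _ (- t + lam)) ?(@mxa _ (- t - lam)); lra.
Qed.

Theorem lemma3p1 (R : rcfType) (n : nat) (lam : R) :
  (2 <= n)%N -> 0 < lam -> @in_H R n [:: (2 * n - 2)%N] (@h_cusum R n lam).
Proof.
move=> hn hl; split => //.
set k := n.-1.
have hN : (2 * n - 2 = k + k)%N by rewrite /k; lia.
exists ((k + k)%:R * lam); split.
  apply: mulr_gt0 => //; rewrite ltr0n; rewrite /k; lia.
pose y (x : 'cV[R]_n) (i : nat) := \sum_(j < n) cusum_v R n i.+1 j * x j 0.
pose W : 'M[R]_(2 * n - 2, n) := \matrix_(i, j)
  (if (i < k)%N then cusum_v R n i.+1 j else - cusum_v R n (i - k).+1 j).
exists (Hidden W (\col_i (- lam)) (Out (const_mx 1))) => x /=.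
have -> : ((const_mx 1 : 'M[R]_(1, 2 * n - 2)) *m relu_b (\col_i (- lam)) (W *m x)) 0 0
    = \sum_(i < k + k) (Num.max ((if (i < k)%N then y x i else - y x (i - k)%N) + lam) 0).
  rewrite mxE -hN; apply: eq_bigr => i _.
  rewrite !mxE mul1r opprK; congr (Num.max (_ + _) 0).
  case: ifP => h; rewrite /y -?sumrN; apply: eq_bigr => j _; rewrite /W mxE h ?mulNr //.
rewrite -(big_mkord xpredT (fun i => Num.max ((if (i < k)%N then y x i else - y x (i - k)%N) + lam) 0)).
rewrite (big_cat_nat (n := k)) ?leq_addr //=.
rewrite [X in _ + X](_ : _ = \sum_(0 <= i < k) Num.max (- y x i + lam) 0); last first.
  rewrite -{1}(add0n k) big_addn addnK; apply: eq_big_nat => i /andP [_ hi].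
  by rewrite ltnNge leq_addl /= addnK.
rewrite (eq_big_nat _ _ (F2 := fun i => Num.max (y x i + lam) 0)); last first.
  by move=> i /andP [_ hi]; rewrite hi.
rewrite -big_split /=.
rewrite (eq_bigr (fun i => 2 * lam + Num.max (`|y x i| - lam) 0)); last first.
  by move=> i _; rewrite g_eq.
rewrite big_split /= sumr_const_nat subn0.
have -> : (k + k)%:R * lam = (2 * lam) *+ k :> R.
  by rewrite -mulr_natl natrD; ring.
rewrite ltrDl /h_cusum /sup_norm.
apply/idP/idP.
- rewrite ltNge => /negP hm.
  have [i hi] : exists i : 'I_k, lam < `|y x i|.
    case: (boolP [exists i : 'I_k, lam < `|y x i|]) => [/existsP //| /existsPn hne].
    exfalso; apply: hm; apply/bigmax_leP; split.
      exact: ltW.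
    by move=> i _; rewrite mxE leNgt; apply: hne.
  rewrite big_mkord (bigD1 i) //=.
  apply: (lt_le_trans (y := Num.max (`|y x i| - lam) 0)).
    by rewrite lt_max subr_gt0 hi.
  rewrite lerDl; apply: sumr_ge0 => j _; by rewrite le_max lexx orbT.
- move=> hs; rewrite ltNge; apply/negP => /bigmax_leP [_ hall].
  move: hs; rewrite ltNge => /negP; apply.
  rewrite le_eqVlt; apply/orP; left; apply/eqP.
  rewrite big_mkord; apply: big1 => i _.
  have := hall i isT; rewrite mxE => hi.
  by apply/mx0; rewrite subr_le0.
Qed.
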